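(* Consider the packet spreading algorithm described in the context with any $N\ge 2$ and positive integers $K_1,\dots,K_N$. Then for every $n\in\{1,\dots,N\}$: $x_n^{K-1}=K_n$ (the output pattern of length $K$ contains exactly $K_n$ occurrences of source $n$), $\tilde Q_n^K=\frac{1}{K_n}$, and consequently $B_n^K=0$.
   Context: Packet spreading algorithm: Let $N\ge 2$, let $K_1,\dots,K_N$ be positive integers and $K=\sum_{n=1}^N K_n$. The algorithm runs iterations $k=0,1,\dots,K-1$ and maintains deficit counters $B_n^k$, $1\le n\le N$, with $B_n^0=0$ for all $n$. In iteration $k$, define the quantums $Q_n^k=\frac{(1-B_n^k)K}{K_n}$; select a source $m_k\in\arg\min_{1\le n\le N} Q_n^k$ (ties broken arbitrarily); let $Q=Q_{m_k}^k$; set $B_n^{k+1}=B_n^k+Q\frac{K_n}{K}$ for $n\neq m_k$ and $B_{m_k}^{k+1}=0$; and set the $k$-th entry of the output pattern to $P(k)=m_k$. (Thus $B_n^{K}$ is defined after the last iteration.) Normalized quantums: $\tilde Q_n^k=Q_n^k/K=(1-B_n^k)/K_n$. For $0\le k\le K-1$, $x_n^k$ denotes the number of indices $k'\in\{0,\dots,k\}$ with $m_{k'}=n$. *)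

(* Defs.v *)
From HB Require Import structures.
From mathcomp Require Import all_boot all_order all_algebra.
Set Implicit Arguments. Unset Strict Implicit. Unset Printing Implicit Defensive.
Import Order.TTheory GRing.Theory Num.Theory.
Local Open Scope ring_scope.

Section PacketSpreading.
Variables (R : realFieldType) (N : nat) (Kn : 'I_N -> nat).

Definition Ktot : nat := (\sum_(n < N) Kn n)%N.

Definition quantum (B : 'I_N -> R) (n : 'I_N) : R :=
  (1 - B n) * (Ktot%:R) / (Kn n)%:R.

Definition nquantum (B : 'I_N -> R) (n : 'I_N) : R :=
  quantum B n / (Ktot%:R).

Definition Bstep (B : 'I_N -> R) (m : 'I_N) : 'I_N -> R :=
  fun n => if n == m then 0 else B n + quantum B m * (Kn n)%:R / (Ktot%:R).

Fixpoint deficit (m : nat -> 'I_N) (k : nat) : 'I_N -> R :=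
  match k with
  | 0 => fun _ => 0
  | k'.+1 => Bstep (deficit m k') (m k')
  end.

Definition valid_run (m : nat -> 'I_N) : Prop :=
  forall k, (k < Ktot)%N ->
    forall n : 'I_N, quantum (deficit m k) (m k) <= quantum (deficit m k) n.

Definition xcount (m : nat -> 'I_N) (n : 'I_N) (k : nat) : nat :=
  count (fun k' => m k' == n) (iota 0 k.+1).

End PacketSpreading.

(* Main.v *)
Require Import Defs.
From HB Require Import structures.
From mathcomp Require Import all_boot all_order all_algebra.
From mathcomp Require Import zify ring lra.
Import Order.TTheory GRing.Theory Num.Theory.
Local Open Scope ring_scope.

Set Implicit Arguments.
Section Helpers.
Variables (R : realFieldType) (N : nat) (Kn : 'I_N -> nat) (m : nat -> 'I_N).
Hypothesis KnP : forall n, (0 < Kn n)%N.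
Hypothesis KP : (0 < Ktot Kn)%N.

Local Notation dfc := (@deficit R N Kn m).

Definition cnt (k : nat) (n : 'I_N) : nat := count (fun k' => m k' == n) (iota 0 k).

Lemma cntS k n : cnt k.+1 n = (cnt k n + (m k == n))%N.
Proof. by rewrite /cnt -addn1 iotaD count_cat /= add0n addn0. Qed.

Lemma sum_cnt k : (\sum_(n < N) cnt k n)%N = k.
Proof.
elim: k => [|k IH]; first by rewrite big1.
under eq_bigr => n _ do rewrite cntS.
rewrite big_split /= IH (bigD1 (m k)) //= eqxx big1 ?addn0 ?addn1 //.
by move=> i /negPf; rewrite eq_sym => ->.
Qed.

Lemma nqE (B : 'I_N -> R) n : nquantum Kn B n = (1 - B n) / (Kn n)%:R.
Proof.
have K0 : (Ktot Kn)%:R != 0 :> R by rewrite pnatr_eq0 -lt0n.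
rewrite /nquantum /quantum; field.
by rewrite K0 pnatr_eq0 -lt0n KnP.
Qed.

Lemma qE (B : 'I_N -> R) n : quantum Kn B n = nquantum Kn B n * (Ktot Kn)%:R.
Proof.
have K0 : (Ktot Kn)%:R != 0 :> R by rewrite pnatr_eq0 -lt0n.
by rewrite /nquantum mulfVK.
Qed.

Definition inv_at (k : nat) (T : R) :=
  forall n, nquantum Kn (dfc k) n = (cnt k n).+1%:R / (Kn n)%:R - T.

Lemma inv_step k T : inv_at k T ->
  inv_at k.+1 ((cnt k (m k)).+1%:R / (Kn (m k))%:R).
Proof.
move=> H n; have Hn := H n; have Hm := H (m k).
have K0 : (Ktot Kn)%:R != 0 :> R by rewrite pnatr_eq0 -lt0n.
have Kn0 : forall j, (Kn j)%:R != 0 :> R by move=> j; rewrite pnatr_eq0 -lt0n KnP.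
rewrite nqE in Hn; rewrite nqE in Hm.
rewrite nqE /= /Bstep cntS.
case: eqP => [->|ne].
  rewrite eqxx addn1 subr0 -addn1 (natrD _ (cnt k (m k)).+1 1); rewrite -addn1 natrD; field; exact: Kn0.
have -> : (m k == n) = false by apply/eqP => e; apply ne; rewrite e.
rewrite addn0 /quantum.
have e1 : 1 - dfc k n = ((cnt k n).+1%:R / (Kn n)%:R - T) * (Kn n)%:R.
  by rewrite -Hn mulfVK.
have e2 : 1 - dfc k (m k) = ((cnt k (m k)).+1%:R / (Kn (m k))%:R - T) * (Kn (m k))%:R.
  by rewrite -Hm mulfVK.
have -> : 1 - (dfc k n + (1 - dfc k (m k)) * (Ktot Kn)%:R /
   (Kn (m k))%:R * (Kn n)%:R / (Ktot Kn)%:R) =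
   (1 - dfc k n) - (1 - dfc k (m k)) * (Kn n)%:R / (Kn (m k))%:R.
  by field; rewrite K0 Kn0.
rewrite e1 e2; field; rewrite !Kn0 //.
Qed.

Lemma inv_all k : exists T, inv_at k T.
Proof.
elim: k => [|k [T H]]; last by eexists; apply: inv_step H.
by exists 0 => n; rewrite nqE /cnt /= subr0 subr0 mul1r.
Qed.

Lemma frac_le a b c d : (0 < b)%N -> (0 < d)%N ->
  (a%:R / b%:R <= c%:R / d%:R :> R) = (a * d <= c * b)%N.
Proof.
move=> b0 d0.
by rewrite ler_pdivrMr ?ltr0n // mulrAC ler_pdivlMr ?ltr0n // -!natrM ler_nat.
Qed.

Hypothesis V : @valid_run R N Kn m.

Lemma cnt_le k : (k <= Ktot Kn)%N -> forall n, (cnt k n <= Kn n)%N.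
Proof.
elim: k => [|k IH] Hk n; first by rewrite /cnt.
have IH' := IH (ltnW Hk).
rewrite cntS; case: eqP => [e|_]; last by rewrite addn0 IH'.
rewrite addn1; rewrite ltn_neqAle IH' andbT; apply/eqP => E.
have [n' Hn'] : exists n', (cnt k n' < Kn n')%N.
  apply/existsP; case: existsP => // Hne; exfalso; have Hall : forall i, ~~ (cnt k i < Kn i)%N by move=> i; apply/negP => Hi; apply: Hne; exists i.
  have : (\sum_(i < N) Kn i <= \sum_(i < N) cnt k i)%N.
    by apply: leq_sum => i _; move: (Hall i); rewrite -leqNgt.
  by rewrite sum_cnt; move: Hk; rewrite /Ktot; lia.
have [T HT] := inv_all k.
have := V k Hk n'; rewrite !qE ler_pM2r ?ltr0n // !HT lerD2r e frac_le //.
rewrite E; move: (KnP n') (KnP n) Hn'; nia.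
Qed.

End Helpers.

Theorem mainTheorem5 (R : realFieldType) (N : nat) (Kn : 'I_N -> nat)
    (m : nat -> 'I_N) :
  (1 < N)%N ->
  (forall n, (0 < Kn n)%N) ->
  @valid_run R N Kn m ->
  forall n : 'I_N,
    xcount m n (Ktot Kn).-1 = Kn n /\
    @nquantum R N Kn (@deficit R N Kn m (Ktot Kn)) n = ((Kn n)%:R)^-1 /\
    @deficit R N Kn m (Ktot Kn) n = 0.
Proof.
move=> N1 KnP V.
have KP : (0 < Ktot Kn)%N.
  rewrite /Ktot (bigD1 (Ordinal (ltnW N1))) //=; move: (KnP (Ordinal (ltnW N1))); lia.
have Hc : forall n, cnt m (Ktot Kn) n = Kn n.
  move=> n; apply/eqP; rewrite eqn_leq (@cnt_le R N Kn m KnP KP V (Ktot Kn) (leqnn _)) /=.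
  have E := sum_cnt m (Ktot Kn).
  have E2 : Ktot Kn = (Kn n + \sum_(i < N | i != n) Kn i)%N by rewrite /Ktot (bigD1 n).
  rewrite (bigD1 n) //= in E.
  have : (\sum_(i < N | i != n) cnt m (Ktot Kn) i <= \sum_(i < N | i != n) Kn i)%N.
    by apply: leq_sum => i _; apply: (@cnt_le R N Kn m KnP KP V (Ktot Kn) (leqnn _)).
  move: E E2; set a := cnt m _ n; set s1 := \sum_(i < N | _) cnt m _ i; set s2 := \sum_(i < N | _) Kn i; set K := Ktot Kn.
  lia.
have Kdef : Ktot Kn = (Ktot Kn).-1.+1 by rewrite prednK.
move=> n; split; first by rewrite /xcount -Kdef; exact: Hc.
have [T HT] := inv_all R Kn m KnP KP (Ktot Kn).-1.
have H := inv_step KnP KP HT.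
rewrite -Kdef in H.
have Hm := Hc (m (Ktot Kn).-1).
rewrite Kdef cntS eqxx addn1 -Kdef in Hm.
rewrite Hm divff ?pnatr_eq0 -?lt0n ?KnP // in H.
have Hn := H n; rewrite Hc in Hn.
have Kn0 : (Kn n)%:R != 0 :> R by rewrite pnatr_eq0 -lt0n KnP.
have E1 : nquantum Kn (@deficit R N Kn m (Ktot Kn)) n = (Kn n)%:R^-1.
  by rewrite Hn -addn1 natrD; field.
split => //.
move: E1; rewrite nqE // => E1.
have : 1 - @deficit R N Kn m (Ktot Kn) n = 1.
  by rewrite -(mulfVK Kn0 (1 - _)) E1 mulVf.
by move/eqP; rewrite subr_eq addrC -subr_eq subrr eq_sym => /eqP.
Qed.
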